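(* Let $g^*(\mathbf{z})=\sum_{\beta\in\mathbb{N}^n}g^*_\beta\mathbf{z}^\beta\in\mathbb{R}[\mathbf{z}]$, $\Gamma=\{\beta: g^*_\beta\neq0\}$, $r=|\Gamma|$, let $N$ be an integer with $N>\max_{1\le i\le n}\max\{\beta_i:\beta\in\Gamma\}$, and let $\varphi=(e^{2i\pi/N},\ldots,e^{2i\pi/N})\in\mathbb{T}^n$. There is a constant $C>0$ depending only on $r$ such that if $\mathfrak{d}\ge C\,\mathcal{E}(\{\varphi^\beta:\beta\in\Gamma\})$, then the linear program $$\min_{\mathbf{x}\in\mathbb{R}^{\{0,\ldots,N-1\}^n}}\Big\{\sum_{\beta}|x_\beta| : \sum_{\beta\in\{0,\ldots,N-1\}^n}\mathbf{A}(\alpha,\beta)\,x_\beta=b_\alpha\ \ \forall\alpha\in\mathscr{A}_{\mathfrak{d}}\Big\},$$ with $\mathbf{A}(\alpha,\beta)=(\varphi^\beta)^\alpha=\prod_{i=1}^n\varphi_i^{\beta_i\alpha_i}$ and $b_\alpha=g^*(\varphi^\alpha)$, has a unique optimal solution, namely the vector $(g^*_\beta)_{\beta\in\{0,\ldots,N-1\}^n}$ of coefficients of $g^*$.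
   Context: $\mathbb{T}^n=\{\mathbf{z}\in\mathbb{C}^n: |z_i|=1\ \forall i\}$; for $\alpha\in\mathbb{Z}^n$, $\mathbf{z}^\alpha=z_1^{\alpha_1}\cdots z_n^{\alpha_n}$. $\mathscr{A}_{\mathfrak{d}}=\{\alpha\in\mathbb{Z}^n:\max_i|\alpha_i|\le\mathfrak{d}\}$. For $d\in\mathbb{N}$, $\mathbb{A}_d$ is the complex space of Laurent polynomials $\sum_{\alpha\in\mathbb{Z}^n,\ \sum_i|\alpha_i|\le d}c_\alpha\mathbf{z}^\alpha$. For a set $\Xi$ of $r$ distinct points of $\mathbb{T}^n$, a family of interpolation polynomials is $u_1,\ldots,u_r\in\mathbb{A}_{r-1}$ with $u_i(\xi_j)=\delta_{ij}$, and $\mathcal{E}(\Xi)$ is the lowest value of $\max_i\max_{\mathbf{z}\in\mathbb{T}^n}|u_i(\mathbf{z})|^2$ over all such families. *)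

(* Defs.v *)
From HB Require Import structures.
From mathcomp Require Import all_boot all_order all_algebra.
From mathcomp Require Import all_classical all_reals all_analysis.
From mathcomp Require Import complex.
Set Implicit Arguments. Unset Strict Implicit. Unset Printing Implicit Defensive.
Import Order.TTheory GRing.Theory Num.Theory.
Local Open Scope ring_scope.
Local Open Scope classical_set_scope.

Section Defs.
Variable R : realType.
Notation C := (R[i]).

Definition cabs (z : C) : R := mathcomp.real_closed.complex.ComplexField.Normc.normc z.

Definition torus (n : nat) : set ('I_n -> C) :=
  [set z | forall i, cabs (z i) = 1].

Definition lmono (n : nat) (z : 'I_n -> C) (alpha : 'I_n -> int) : C :=
  \prod_(i < n) (z i) ^ (alpha i).

(* exponents alpha in Z^n with max_i |alpha_i| <= d, encoded as the box
   {0..2d}^n shifted by -d *)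
Definition lexp (n d : nat) := {ffun 'I_n -> 'I_(2 * d).+1}.
Definition lexp_val (n d : nat) (k : lexp n d) : 'I_n -> int :=
  fun i => (val (k i))%:Z - d%:Z.

Definition l1deg (n : nat) (alpha : 'I_n -> int) : nat :=
  \sum_(i < n) `|alpha i|%N.

(* An element of A_d is given by complex coefficients c_alpha for the
   exponents alpha with sum_i |alpha_i| <= d (all such alpha lie in the
   box lexp n d); its value at z is sum c_alpha z^alpha. *)
Definition lpoly (n d : nat) := lexp n d -> C.
Definition lpoly_eval (n d : nat) (u : lpoly n d) (z : 'I_n -> C) : C :=
  \sum_(k : lexp n d | (l1deg (lexp_val k) <= d)%N)
     u k * lmono z (lexp_val k).

Definition torus_max2 (n d : nat) (u : lpoly n d) : R :=
  sup [set (cabs (lpoly_eval u z)) ^+ 2 | z in @torus n].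

Definition interpE (n r : nat) (xi : 'I_r -> ('I_n -> C)) : R :=
  inf [set M | exists u : 'I_r -> lpoly n r.-1,
         (forall i j, lpoly_eval (u i) (xi j) = (i == j)%:R) /\
         M = \big[Num.max/0]_(i < r) torus_max2 (u i)].

Definition omegaN (N : nat) : C :=
  Complex (cos (2 * pi / N%:R)) (sin (2 * pi / N%:R)).

Definition phipow (n N : nat) (beta : 'I_n -> nat) : 'I_n -> C :=
  fun i => omegaN N ^+ beta i.

Definition phipowz (n N : nat) (alpha : 'I_n -> int) : 'I_n -> C :=
  fun i => omegaN N ^ alpha i.

(* A polynomial g in R[z_1..z_n] is given by its coefficient function
   g : N^n -> R together with a duplicate-free list Gamma that is exactly
   its support.  Its evaluation at a complex point: *)
Definition rpoly_eval (n : nat) (Gamma : seq {ffun 'I_n -> nat})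
    (g : {ffun 'I_n -> nat} -> R) (z : 'I_n -> C) : C :=
  \sum_(beta <- Gamma) real_complex R (g beta) * \prod_(i < n) (z i) ^+ beta i.

Definition LPmat (n N : nat) (alpha : 'I_n -> int)
    (beta : {ffun 'I_n -> 'I_N}) : C :=
  \prod_(i < n) omegaN N ^ ((val (beta i))%:Z * alpha i).

Definition LPfeasible (n N d : nat) (b : ('I_n -> int) -> C)
    (x : {ffun 'I_n -> 'I_N} -> R) : Prop :=
  forall alpha : 'I_n -> int, (forall i, `|alpha i| <= d%:Z) ->
    \sum_(beta : {ffun 'I_n -> 'I_N}) LPmat alpha beta * real_complex R (x beta)
      = b alpha.

Definition l1norm (n N : nat) (x : {ffun 'I_n -> 'I_N} -> R) : R :=
  \sum_(beta : {ffun 'I_n -> 'I_N}) `|x beta|.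

Definition LPunique_opt (n N d : nat) (b : ('I_n -> int) -> C)
    (x0 : {ffun 'I_n -> 'I_N} -> R) : Prop :=
  LPfeasible d b x0 /\
  forall x, LPfeasible d b x -> x <> x0 -> l1norm x0 < l1norm x.

Definition coef_box (n N : nat) (g : {ffun 'I_n -> nat} -> R)
    (beta : {ffun 'I_n -> 'I_N}) : R :=
  g [ffun i => val (beta i)].

End Defs.

(* Main.v *)
Require Import Defs.
From HB Require Import structures.
From mathcomp Require Import all_boot all_order all_algebra.
From mathcomp Require Import all_classical all_reals all_analysis.
From mathcomp Require Import complex.
From mathcomp Require Import ring lra zify.
Import Order.TTheory GRing.Theory Num.Theory.
Local Open Scope ring_scope.
Set Implicit Arguments. Unset Strict Implicit. Unset Printing Implicit Defensive.
Section LP.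
Variable R : realType.
Local Notation C := R[i].
Variable n : nat.
Definition lp := seq (C * ('I_n -> int)).
Definition lpe (L : lp) (z : 'I_n -> C) : C := \sum_(p <- L) p.1 * lmono z p.2.
Definition lpmul (L1 L2 : lp) : lp :=
  [seq (p.1 * q.1, fun i => p.2 i + q.2 i) | p <- L1, q <- L2].
Definition lpconj (L : lp) : lp := [seq (conjc p.1, fun i => - p.2 i) | p <- L].
Definition lpc (c : C) : lp := [:: (c, fun _ => 0)].
Definition lpdeg (D : nat) (L : lp) := all (fun p => (l1deg p.2 <= D)%N) L.
Definition unitz (z : 'I_n -> C) := forall i, z i != 0.
Definition torz (z : 'I_n -> C) := forall i, conjc (z i) = (z i)^-1.

Lemma lpe_cat L1 L2 z : lpe (L1 ++ L2) z = lpe L1 z + lpe L2 z.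
Proof. by rewrite /lpe big_cat. Qed.

Lemma lpe_nil z : lpe [::] z = 0.
Proof. by rewrite /lpe big_nil. Qed.

Lemma lmono0 (z : 'I_n -> C) : lmono z (fun _ => 0) = 1.
Proof. by rewrite /lmono big1 // => i _; rewrite expr0z. Qed.

Lemma lpe_c c z : lpe (lpc c) z = c.
Proof. by rewrite /lpe big_cons big_nil addr0 /= lmono0 mulr1. Qed.

Lemma lmonoD z a b : unitz z ->
  lmono z (fun i => a i + b i) = lmono z a * lmono z b.
Proof.
move=> uz; rewrite /lmono -big_split; apply: eq_bigr => i _ /=.
by rewrite exprzDr // unitfE.
Qed.

Lemma lpe_mul L1 L2 z : unitz z -> lpe (lpmul L1 L2) z = lpe L1 z * lpe L2 z.
Proof.
move=> uz; rewrite /lpe /lpmul big_allpairs_dep /= big_distrl.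
apply: eq_bigr => p _; rewrite big_distrr; apply: eq_bigr => q _ /=.
by rewrite lmonoD // mulrACA.
Qed.

Lemma lmonoN z a : torz z ->
  lmono z (fun i => - a i) = conjc (lmono z a).
Proof.
move=> tz; rewrite /lmono rmorph_prod; apply: eq_bigr => i _ /=.
by rewrite fmorphXz /= tz exprz_inv.
Qed.

Lemma lpe_conj L z : torz z -> lpe (lpconj L) z = conjc (lpe L z).
Proof.
move=> tz; rewrite /lpe /lpconj big_map rmorph_sum; apply: eq_bigr => p _ /=.
by rewrite rmorphM lmonoN.
Qed.

Definition lpprod (I : Type) (s : seq I) (F : I -> lp) : lp :=
  foldr (fun j acc => lpmul (F j) acc) (lpc 1) s.
Definition lpsum (I : Type) (s : seq I) (F : I -> lp) : lp := flatten (map F s).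
Definition lpexp (L : lp) (m : nat) : lp := iter m (lpmul L) (lpc 1).

Lemma lpe_prod I (s : seq I) F z : unitz z ->
  lpe (lpprod s F) z = \prod_(j <- s) lpe (F j) z.
Proof.
move=> uz; elim: s => [|j s IH] /=; first by rewrite big_nil lpe_c.
by rewrite big_cons lpe_mul // IH.
Qed.

Lemma lpe_sum I (s : seq I) F z : lpe (lpsum s F) z = \sum_(j <- s) lpe (F j) z.
Proof.
elim: s => [|j s IH] /=; first by rewrite big_nil lpe_nil.
by rewrite big_cons lpe_cat -IH.
Qed.

Lemma lpe_exp L m z : unitz z -> lpe (lpexp L m) z = lpe L z ^+ m.
Proof.
move=> uz; elim: m => [|m IH] /=; first by rewrite lpe_c expr0.
by rewrite lpe_mul // IH exprS.
Qed.

Lemma l1degD (a b : 'I_n -> int) :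
  (l1deg (fun i => (a i + b i)%R) <= l1deg a + l1deg b)%N.
Proof.
rewrite /l1deg -big_split /=; apply: leq_sum => i _.
rewrite -(@ler_nat int) natrD !natr_absz !intz; exact: ler_normD.
Qed.

Lemma l1degN (a : 'I_n -> int) : l1deg (fun i => - a i) = l1deg a.
Proof. by rewrite /l1deg; apply: eq_bigr => i _; rewrite abszN. Qed.

Lemma l1deg0 : l1deg (fun _ : 'I_n => 0) = 0%N.
Proof. by rewrite /l1deg big1. Qed.

Lemma lpdegW D D' L : (D <= D')%N -> lpdeg D L -> lpdeg D' L.
Proof.
move=> DD /allP H; apply/allP => p /H /= h; exact: leq_trans h DD.
Qed.

Lemma lpdeg_cat D L1 L2 : lpdeg D L1 -> lpdeg D L2 -> lpdeg D (L1 ++ L2).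
Proof. by rewrite /lpdeg all_cat => -> ->. Qed.

Lemma lpdeg_c D c : lpdeg D (lpc c).
Proof. by rewrite /lpdeg /= l1deg0. Qed.

Lemma lpdeg_mul D1 D2 L1 L2 : lpdeg D1 L1 -> lpdeg D2 L2 ->
  lpdeg (D1 + D2) (lpmul L1 L2).
Proof.
elim: L1 => [|p L1 IH] //= /andP[hp h1] h2.
rewrite /lpdeg /lpmul allpairs_cons all_cat.
have := IH h1 h2; rewrite /lpdeg /lpmul => -> ; rewrite andbT all_map.
apply: sub_all h2 => q /= hq.
apply: leq_trans (l1degD _ _) _; exact: leq_add.
Qed.

Lemma lpdeg_conj D L : lpdeg D L -> lpdeg D (lpconj L).
Proof. by move=> h; rewrite /lpdeg all_map; apply: sub_all h => p /=; rewrite l1degN. Qed.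

Lemma lpdeg_prod I (s : seq I) F D : (forall j, lpdeg D (F j)) ->
  lpdeg (D * size s) (lpprod s F).
Proof.
move=> H; elim: s => [|j s IH]; first exact: lpdeg_c.
by rewrite /= mulnS; apply: lpdeg_mul.
Qed.

Lemma lpdeg_sum I (s : seq I) F D : (forall j, lpdeg D (F j)) ->
  lpdeg D (lpsum s F).
Proof.
move=> H; elim: s => [|j s IH]; first by [].
exact: lpdeg_cat.
Qed.

Lemma lpdeg_exp L m D : lpdeg D L -> lpdeg (D * m) (lpexp L m).
Proof.
move=> H; elim: m => [|m IH]; first exact: lpdeg_c.
by rewrite /= mulnS; apply: lpdeg_mul.
Qed.

End LP.
Section Grid.
Variable R : realType.
Local Notation C := R[i].
Variable N : nat.
Local Notation w := (omegaN R N).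
Local Notation th := (2 * pi / (N%:R : R)).

Lemma omega_pow k : w ^+ k = Complex (cos (k%:R * th)) (sin (k%:R * th)).
Proof.
elim: k => [|k IH]; first by rewrite expr0 mul0r cos0 sin0.
have e : (k.+1%:R : R) * th = k%:R * th + th by rewrite -natr1 mulrDl mul1r.
rewrite exprSr IH /omegaN e cosD sinD.
by congr Complex; rewrite addrC.
Qed.

Lemma cabs_cs (x : R) : cabs (Complex (cos x) (sin x)) = 1.
Proof. by rewrite /cabs /= cos2Dsin2 sqrtr1. Qed.

Lemma cabs_omega_pow k : cabs (w ^+ k) = 1.
Proof. by rewrite omega_pow cabs_cs. Qed.

Lemma omega_conjM : conjc w * w = 1.
Proof.
rewrite /omegaN /= /conjc; apply/eqP; rewrite eq_complex /=; apply/andP; split.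
  by rewrite mulNr opprK -!expr2 cos2Dsin2.
by rewrite mulNr mulrC subrr.
Qed.

Lemma omega_neq0 : w != 0.
Proof.
apply/negP => /eqP h; have := omega_conjM; rewrite h mulr0 => /eqP.
by rewrite eq_sym oner_eq0.
Qed.

Lemma omega_conj : conjc w = w^-1.
Proof.
by apply: (mulIf omega_neq0); rewrite omega_conjM mulVf // omega_neq0.
Qed.

Lemma omega_pow1 k : (0 < k < N)%N -> w ^+ k != 1.
Proof.
move=> /andP[k0 kN]; rewrite omega_pow; apply/negP => /eqP [] hc _.
have N0 : (N%:R : R) != 0 by rewrite pnatr_eq0 -lt0n (leq_trans k0 (ltnW kN)).
pose y : R := k%:R * pi / N%:R.
have ey : k%:R * th = y *+ 2 by rewrite /y -mulr_natr; field.
move: hc; rewrite ey cos_mulr2n => hc.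
have h : cos y ^+ 2 = 1 by move: hc; rewrite -mulr_natr; set t := cos y ^+ 2; lra.
have : sin y ^+ 2 = 0 by rewrite sin2cos2 h subrr.
move/eqP; rewrite expf_eq0 /= => /eqP sy.
have : 0 < sin y.
  apply: sin_gt0_pi; apply/andP; split.
    by rewrite /y mulr_gt0 ?invr_gt0 ?mulr_gt0 ?ltr0n ?pi_gt0 // (leq_trans k0 (ltnW kN)).
  rewrite /y ltr_pdivrMr ?ltr0n ?(leq_trans k0 (ltnW kN)) // mulrC ltr_pM2l ?pi_gt0 //.
  by rewrite ltr_nat.
by rewrite sy ltxx.
Qed.

Lemma omega_inj a b : (a < N)%N -> (b < N)%N -> w ^+ a = w ^+ b -> a = b.
Proof.
wlog ab : a b / (a <= b)%N.
  move=> H aN bN e; case: (leqP a b) => h; first exact: H.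
  by apply/esym/H => //; apply: ltnW.
move=> aN bN e; apply/eqP; rewrite eqn_leq ab /= leqNgt; apply/negP => lt_ab.
have : w ^+ (b - a) == 1.
  apply/eqP; apply: (mulfI (expf_neq0 a omega_neq0)).
  by rewrite -exprD subnKC // mulr1 e.
apply/negP; apply: omega_pow1; rewrite subn_gt0 lt_ab /=.
exact: leq_ltn_trans (leq_subr _ _) bN.
Qed.

Variable n : nat.
Definition zg (beta : {ffun 'I_n -> 'I_N}) : 'I_n -> C := fun i => w ^+ val (beta i).
Definition emb (beta : {ffun 'I_n -> 'I_N}) : {ffun 'I_n -> nat} := [ffun i => val (beta i)].

Lemma phipow_emb beta : phipow R N (emb beta) = zg beta.
Proof. by apply: funext => i; rewrite /phipow /emb ffunE. Qed.

Lemma zg_unit beta : unitz (zg beta).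
Proof. by move=> i; rewrite /zg expf_neq0 // omega_neq0. Qed.

Lemma zg_tor beta : torz (zg beta).
Proof.
move=> i; rewrite /zg.
have -> : conjc (w ^+ val (beta i)) = (conjc w) ^+ val (beta i) by exact: rmorphXn.
by rewrite omega_conj exprVn.
Qed.

Lemma lmono_grid beta (alpha : 'I_n -> int) : lmono (zg beta) alpha = LPmat R alpha beta.
Proof.
rewrite /lmono /LPmat; apply: eq_bigr => i _; rewrite /zg.
by rewrite -exprz_exp.
Qed.

End Grid.
Section Feas.
Variable R : realType.
Local Notation C := R[i].
Variables (n N d : nat).
Local Notation box := {ffun 'I_n -> 'I_N}.
Local Notation w := (omegaN R N).

Lemma emb_inj : injective (@emb N n).
Proof.
move=> b1 b2 e; apply/ffunP => i; apply: val_inj.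
by have := congr1 (fun f : {ffun 'I_n -> nat} => f i) e; rewrite /emb !ffunE.
Qed.

Lemma reindex_box (Gamma : seq {ffun 'I_n -> nat}) (F : {ffun 'I_n -> nat} -> C) :
  uniq Gamma -> (forall gam, gam \in Gamma -> forall i, (gam i < N)%N) ->
  (forall gam, gam \notin Gamma -> F gam = 0) ->
  \sum_(b : box) F (emb b) = \sum_(gam <- Gamma) F gam.
Proof.
move=> uG hN hF.
rewrite (bigID (fun b => emb b \in Gamma)) /= [X in _ + X]big1 ?addr0; last first.
  by move=> b /hF.
rewrite -big_filter -(big_map (@emb N n) xpredT F).
apply: perm_big; apply: uniq_perm => //.
  rewrite map_inj_uniq ?filter_uniq //; first exact: index_enum_uniq.
  exact: emb_inj.
move=> gam; apply/mapP/idP => [[b]|gG].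
  by rewrite mem_filter => /andP[h _] ->.
exists [ffun i => Ordinal (hN gam gG i)].
  rewrite mem_filter mem_index_enum andbT.
  suff -> : emb [ffun i => Ordinal (hN gam gG i)] = gam by [].
  by apply/ffunP => i; rewrite /emb !ffunE.
by apply/ffunP => i; rewrite /emb !ffunE.
Qed.

Lemma feas0 (Gamma : seq {ffun 'I_n -> nat}) (g : {ffun 'I_n -> nat} -> R) :
  uniq Gamma -> (forall beta, (beta \in Gamma) = (g beta != 0)) ->
  (forall beta, beta \in Gamma -> forall i, (beta i < N)%N) ->
  forall alpha : 'I_n -> int,
  \sum_(beta : box) LPmat R alpha beta * real_complex R (coef_box g beta)
   = rpoly_eval Gamma g (phipowz R N alpha).
Proof.
move=> uG hG hN alpha; rewrite /rpoly_eval.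
pose F (gam : {ffun 'I_n -> nat}) := real_complex R (g gam) *
    \prod_(i < n) (phipowz R N alpha i) ^+ gam i.
rewrite -(reindex_box (F := F)) //; last first.
  by move=> gam; rewrite hG negbK /F => /eqP ->; rewrite mul0r.
apply: eq_bigr => b _; rewrite /F mulrC /coef_box; congr (_ * _).
apply: eq_bigr => i _; rewrite /phipowz /emb ffunE.
have -> : forall (x : C) (k : nat), x ^+ k = x ^ (k%:Z) by [].
by rewrite exprz_exp mulrC.
Qed.

Definition annih (h : box -> R) := forall alpha : 'I_n -> int,
  (forall i, `|alpha i| <= d%:Z) ->
  \sum_(beta : box) LPmat R alpha beta * real_complex R (h beta) = 0.

Lemma annih_diff b (x x0 : box -> R) : LPfeasible d b x -> LPfeasible d b x0 ->
  annih (fun beta => x beta - x0 beta).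
Proof.
move=> hx hx0 alpha ha.
under eq_bigr do rewrite rmorphB mulrBr.
by rewrite sumrB hx // hx0 // subrr.
Qed.

Lemma abs_le_l1deg (a : 'I_n -> int) i : (`|a i| <= l1deg a)%N.
Proof. by rewrite /l1deg (bigD1 i) //= leq_addr. Qed.

Lemma annih_lp h (L : lp R n) : annih h -> lpdeg d L ->
  \sum_(beta : box) lpe L (zg R beta) * real_complex R (h beta) = 0.
Proof.
move=> ah; rewrite /lpe.
under eq_bigr do rewrite big_distrl.
rewrite exchange_big /=.
elim: L => [|p L IH] /=; first by rewrite big_nil.
move=> /andP[hp hL]; rewrite big_cons IH // addr0.
under eq_bigr do rewrite -mulrA lmono_grid.
rewrite -big_distrr /= ah ?mulr0 // => i.
rewrite -abszE lez_nat; exact: leq_trans (abs_le_l1deg _ _) hp.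
Qed.

Lemma Re_mulR (z : C) (k : R) : complex.Re (z * real_complex R k) = complex.Re z * k.
Proof. by case: z => a b /=; rewrite mulr0 subr0. Qed.

Lemma annih_Re h (L : lp R n) : annih h -> lpdeg d L ->
  \sum_(beta : box) complex.Re (lpe L (zg R beta)) * h beta = 0.
Proof.
move=> ah hL.
transitivity (\sum_(b : box) complex.Re (lpe L (zg R b) * real_complex R (h b))).
  by apply: eq_bigr => b _; rewrite Re_mulR.
by rewrite -raddf_sum annih_lp.
Qed.

Lemma lp_unique (x0 x v : box -> R) (S : pred box) :
  (forall b, v b * x0 b = `|x0 b|) ->
  (forall b, `|v b| <= 1) ->
  (forall b, ~~ S b -> `|v b| < 1) ->
  \sum_b v b * (x b - x0 b) = 0 ->
  ((forall b, ~~ S b -> x b = x0 b) -> x = x0) ->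
  x <> x0 -> l1norm x0 < l1norm x.
Proof.
move=> hv0 hv1 hvS hsum hinj neq.
have pw b : `|x0 b| + v b * (x b - x0 b) <= `|x b|.
  rewrite mulrBr hv0 addrC subrK.
  apply: le_trans (ler_norm _) _; rewrite normrM.
  by rewrite -[leRHS]mul1r ler_wpM2r.
have l1e : l1norm x0 = \sum_b (`|x0 b| + v b * (x b - x0 b)).
  by rewrite big_split /= hsum addr0.
case: (boolP [exists b, ~~ S b && (x b != x0 b)]) => [/existsP [b /andP[nSb nb]]|nex].
  rewrite l1e /l1norm (bigD1 b) //= [X in _ < X](bigD1 b) //=.
  apply: ltr_leD; last by apply: ler_sum => c _; exact: pw.
  have vb := hvS b nSb.
  have x0b : x0 b = 0.
    apply/eqP; rewrite -normr_eq0; apply: contraT => nz.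
    have e : `|x0 b| = `|v b| * `|x0 b| by rewrite -normrM hv0 normr_id.
    have : `|v b| * `|x0 b| < `|x0 b|.
      rewrite -[ltRHS]mul1r ltr_pM2r //.
      by rewrite normr_gt0 -normr_eq0.
    by rewrite -e ltxx.
  rewrite x0b normr0 add0r subr0.
  apply: le_lt_trans (ler_norm _) _; rewrite normrM.
  rewrite -[ltRHS]mul1r ltr_pM2r // normr_gt0.
  by rewrite x0b in nb.
exfalso; apply: neq; apply: hinj => b nSb.
apply/eqP; apply: contraNT nex => nb; apply/existsP; exists b; by rewrite nSb.
Qed.
End Feas.
Section Conv.
Variable R : realType.
Local Notation C := R[i].
Variable n : nat.

Lemma cabs0 : cabs (0 : C) = 0.
Proof. exact: Normc.normc0. Qed.
Lemma cabs1 : cabs (1 : C) = 1.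
Proof. exact: Normc.normc1. Qed.
Lemma cabsM (x y : C) : cabs (x * y) = cabs x * cabs y.
Proof. exact: Normc.normcM. Qed.
Lemma cabsD (x y : C) : cabs (x + y) <= cabs x + cabs y.
Proof. exact: le_normcD. Qed.
Lemma cabs_ge0 (x : C) : 0 <= cabs x.
Proof. by case: x => a b; rewrite /cabs /= sqrtr_ge0. Qed.
Lemma cabsV (x : C) : cabs (x^-1) = (cabs x)^-1.
Proof. exact: Normc.normcV. Qed.
Lemma cabsX (x : C) k : cabs (x ^+ k) = cabs x ^+ k.
Proof. by elim: k => [|k IH]; rewrite ?expr0 ?cabs1 // !exprS cabsM IH. Qed.
Lemma cabs_prod I (s : seq I) (F : I -> C) : cabs (\prod_(i <- s) F i) = \prod_(i <- s) cabs (F i).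
Proof.
elim: s => [|j s IH]; first by rewrite !big_nil cabs1.
by rewrite !big_cons cabsM IH.
Qed.
Lemma cabs_sum I (s : seq I) (P : pred I) (F : I -> C) :
  cabs (\sum_(i <- s | P i) F i) <= \sum_(i <- s | P i) cabs (F i).
Proof.
apply: (big_rec2 (fun a b => cabs b <= a)); first by rewrite cabs0.
move=> i a b _ h; apply: le_trans (cabsD _ _) _; exact: lerD.
Qed.
Lemma cabs_real (k : R) : cabs (real_complex R k) = `|k|.
Proof. by rewrite /cabs /= expr0n addr0 sqrtr_sqr. Qed.
Lemma conj_mul_cabs (x : C) : x * conjc x = real_complex R (cabs x ^+ 2).
Proof.
case: x => a b; rewrite /cabs /= sqr_sqrtr ?addr_ge0 ?sqr_ge0 //.
apply/eqP; rewrite eq_complex /=; apply/andP; split; apply/eqP.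
  by rewrite mulrN opprK -!expr2.
by rewrite mulrN mulrC addrC subrr.
Qed.

Lemma cabs_lmono (z : 'I_n -> C) a : (forall i, cabs (z i) = 1) -> cabs (lmono z a) = 1.
Proof.
move=> tz; rewrite /lmono cabs_prod big1 // => i _.
case: (a i) => m; first by rewrite cabsX tz expr1n.
by rewrite cabsV cabsX tz expr1n invr1.
Qed.

Lemma lpoly_eval_bound D (u : lpoly R n D) z : (forall i, cabs (z i) = 1) ->
  cabs (lpoly_eval u z) <= \sum_k cabs (u k).
Proof.
move=> tz; rewrite /lpoly_eval; apply: le_trans (cabs_sum _ _ _) _.
rewrite [leRHS](bigID (fun k : lexp n D => (l1deg (lexp_val k) <= D)%N)) /=.
rewrite -[leLHS]addr0; apply: lerD.
  by apply: ler_sum => k _; rewrite cabsM cabs_lmono // mulr1.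
by apply: sumr_ge0 => k _; exact: cabs_ge0.
Qed.

Lemma torus_max2_ge D (u : lpoly R n D) z : @torus R n z ->
  cabs (lpoly_eval u z) ^+ 2 <= torus_max2 u.
Proof.
move=> tz; apply: ub_le_sup; last by exists z.
exists ((\sum_k cabs (u k)) ^+ 2) => _ [y ty <-].
rewrite ler_pXn2r ?nnegrE ?cabs_ge0 //; last by apply: sumr_ge0 => k _; exact: cabs_ge0.
exact: lpoly_eval_bound.
Qed.

Definition lp_of D (u : lpoly R n D) : lp R n :=
  [seq (u k, lexp_val k) | k <- [seq k <- index_enum (lexp n D) | (l1deg (lexp_val k) <= D)%N]].

Lemma lpe_of D (u : lpoly R n D) z : lpe (lp_of u) z = lpoly_eval u z.
Proof. by rewrite /lpe /lp_of big_map big_filter. Qed.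

Lemma lpdeg_of D (u : lpoly R n D) : lpdeg D (lp_of u).
Proof. by rewrite /lpdeg /lp_of all_map; apply/allP => k; rewrite mem_filter => /andP[]. Qed.

Definition of_lp D (L : lp R n) : lpoly R n D :=
  fun k => \sum_(p <- L | [forall i, p.2 i == lexp_val k i]) p.1.

Lemma lexp_val_inj D : injective (@lexp_val n D).
Proof.
move=> k1 k2 e; apply/ffunP => i; apply: val_inj.
have := congr1 (fun f => f i) e; rewrite /lexp_val => /eqP.
by rewrite (inj_eq (addIr _)) => /eqP [].
Qed.

Lemma single_term D (a : 'I_n -> int) (c : C) (z : 'I_n -> C) : (l1deg a <= D)%N ->
  \sum_(k : lexp n D | (l1deg (lexp_val k) <= D)%N)
     (if [forall i, a i == lexp_val k i] then c else 0) * lmono z (lexp_val k)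
  = c * lmono z a.
Proof.
move=> ha.
have hb i : (- D%:Z <= a i <= D%:Z).
  rewrite -ler_norml -abszE lez_nat; exact: leq_trans (abs_le_l1deg _ _) ha.
pose k0 : lexp n D := [ffun i => inord `|(a i + D%:Z)%R|%N].
have k0v : lexp_val k0 = a.
  apply: funext => i; rewrite /lexp_val /k0 ffunE -[val _]/(nat_of_ord _) inordK.
    rewrite gez0_abs ?addrK //; have := hb i; rewrite -subr_ge0 opprK; lia.
  rewrite ltnS -(@ler_nat int) natr_absz intz ger0_norm.
    by have := hb i; rewrite natrM; lia.
  by have := hb i; lia.
rewrite (bigD1 k0) /=; last by rewrite k0v.
rewrite big1 ?addr0.
  suff -> : [forall i, a i == lexp_val k0 i] by rewrite k0v.
  by apply/forallP => i; rewrite k0v.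
move=> k /andP[_ nk]; case: ifP => [/forallP h|_]; last by rewrite mul0r.
exfalso; move/negP: nk; apply; apply/eqP; apply: lexp_val_inj.
by apply: funext => i; rewrite k0v; apply/esym/eqP.
Qed.

Lemma of_lpE D (L : lp R n) z : lpdeg D L -> lpoly_eval (of_lp L : lpoly R n D) z = lpe L z.
Proof.
elim: L => [|p L IH] /=.
  by move=> _; rewrite lpe_nil /lpoly_eval big1 // => k _; rewrite /of_lp big_nil mul0r.
move=> /andP[hp hL]; rewrite /lpe big_cons -/(lpe L z) -IH //.
rewrite /lpoly_eval /of_lp.
have ifD0 (b : bool) (x y : C) : (if b then x + y else y) = (if b then x else 0) + y.
  by case: b; rewrite ?add0r.
under eq_bigr do rewrite big_cons ifD0 mulrDl.
rewrite big_split /=; congr (_ + _).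
rewrite -(single_term p.1 z hp); apply: eq_bigr => k _.
by case: ifP.
Qed.


End Conv.
Lemma size_filter_neq r (j : 'I_r) : size [seq k <- enum 'I_r | k != j] = r.-1.
Proof.
have := cardC1 j; rewrite card_ord => <-.
rewrite cardE size_filter /enum_mem size_filter (@eq_filter _ _ predT) // filter_predT.
by apply: eq_count => k; rewrite !inE.
Qed.

Lemma le_bigmax_r (R : realType) r (F : 'I_r -> R) i : F i <= \big[Num.max/0]_(j < r) F j.
Proof. by rewrite (bigD1 i) //= le_max lexx. Qed.

Lemma bigmax_le_r (R : realType) r (F : 'I_r -> R) M : 0 <= M -> (forall i, F i <= M) ->
  \big[Num.max/0]_(j < r) F j <= M.
Proof.
move=> M0 h; elim/big_rec: _ => // i x _ hx.
by rewrite ge_max h hx.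
Qed.

Section Interp.
Variable R : realType.
Local Notation C := R[i].
Variables (n N r : nat) (Gamma : seq {ffun 'I_n -> nat}).
Hypotheses (uG : uniq Gamma) (sG : size Gamma = r)
  (hN : forall b, b \in Gamma -> forall i, (b i < N)%N).
Local Notation w := (omegaN R N).

Definition xi (j : 'I_r) : 'I_n -> C := phipow R N (nth [ffun => 0%N] Gamma j).

Lemma wpt_tor (f : 'I_n -> nat) : @torus R n (fun i => w ^+ f i).
Proof. by move=> i; rewrite cabs_omega_pow. Qed.
Lemma wpt_unit (f : 'I_n -> nat) : unitz (fun i => w ^+ f i).
Proof. by move=> i; rewrite expf_neq0 // omega_neq0. Qed.
Lemma wpt_torz (f : 'I_n -> nat) : torz (fun i => w ^+ f i).
Proof.
move=> i /=.
have -> : conjc (w ^+ f i) = (conjc w) ^+ f i by exact: rmorphXn.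
by rewrite omega_conj exprVn.
Qed.

Lemma xi_in (j : 'I_r) : nth [ffun => 0%N] Gamma j \in Gamma.
Proof. by rewrite mem_nth // sG. Qed.

Lemma xi_diff (j k : 'I_r) : j != k -> exists i, xi j i != xi k i.
Proof.
move=> jk.
have ne : nth [ffun => 0%N] Gamma j != nth [ffun => 0%N] Gamma k.
  by rewrite nth_uniq ?sG.
case: (pickP (fun i => nth [ffun => 0%N] Gamma j i != nth [ffun => 0%N] Gamma k i)) => [i hi|h].
  exists i; apply/negP => /eqP e; move/negP: hi; apply; apply/eqP.
  exact: (omega_inj (hN (xi_in j) i) (hN (xi_in k) i) e).
exfalso; move/negP: ne; apply; apply/eqP/ffunP => i.
by apply/eqP; have := h i => /negbFE.
Qed.

Definition eunit (i : 'I_n) : 'I_n -> int := fun i' => (i' == i)%:Z.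

Lemma lmono_eunit (z : 'I_n -> C) i : lmono z (eunit i) = z i.
Proof.
rewrite /lmono (bigD1 i) //= big1 ?mulr1 /eunit ?eqxx //.
by move=> i' ne; rewrite (negbTE ne) expr0z.
Qed.

Lemma l1deg_eunit i : l1deg (eunit i) = 1%N.
Proof.
rewrite /l1deg (bigD1 i) //= big1 ?addn0 /eunit ?eqxx //.
by move=> i' ne; rewrite (negbTE ne).
Qed.

Definition Lfac (j k : 'I_r) : lp R n :=
  if [pick i | xi j i != xi k i] is Some i then
    [:: ((xi j i - xi k i)^-1, eunit i); (- xi k i * (xi j i - xi k i)^-1, fun _ => 0)]
  else lpc n 1.

Lemma lpe_two (c1 c2 : C) a (z : 'I_n -> C) :
  lpe [:: (c1, a); (c2, fun _ => 0)] z = c1 * lmono z a + c2.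
Proof. by rewrite /lpe !big_cons big_nil /= lmono0 addr0 mulr1. Qed.

Lemma lpe_Lfac_same j k : lpe (Lfac j k) (xi j) = 1.
Proof.
rewrite /Lfac; case: pickP => [i hi|_]; last by rewrite lpe_c.
rewrite lpe_two lmono_eunit mulNr [_^-1 * _]mulrC -mulrBl divff //.
by rewrite subr_eq0.
Qed.

Lemma lpe_Lfac_zero j k : j != k -> lpe (Lfac j k) (xi k) = 0.
Proof.
move=> jk; rewrite /Lfac; case: pickP => [i hi|h].
  by rewrite lpe_two lmono_eunit mulNr [_^-1 * _]mulrC subrr.
by exfalso; have [i hi] := xi_diff jk; have := h i; rewrite hi.
Qed.

Lemma lpdeg_Lfac j k : lpdeg 1 (Lfac j k).
Proof.
rewrite /Lfac; case: pickP => [i hi|_]; last exact: lpdeg_c.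
by rewrite /lpdeg /= l1deg_eunit l1deg0.
Qed.

Definition Lag (j : 'I_r) : lp R n := lpprod [seq k <- enum 'I_r | k != j] (Lfac j).

Lemma xi_unit j : unitz (xi j).
Proof. exact: wpt_unit. Qed.

Lemma Lag_interp j l : lpe (Lag j) (xi l) = (j == l)%:R.
Proof.
rewrite /Lag lpe_prod; last exact: xi_unit.
case: eqP => [<-|/eqP jl].
  by rewrite big1 // => k _; rewrite lpe_Lfac_same.
rewrite (bigD1_seq l) /=.
- by rewrite lpe_Lfac_zero // mul0r.
- by rewrite mem_filter eq_sym jl mem_enum.
- by rewrite filter_uniq // enum_uniq.
Qed.

Lemma lpdeg_Lag j : lpdeg r.-1 (Lag j).
Proof.
have := lpdeg_prod [seq k <- enum 'I_r | k != j] (lpdeg_Lfac j).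
by rewrite size_filter_neq mul1n.
Qed.

Definition ulag (j : 'I_r) : lpoly R n r.-1 := of_lp (Lag j).

Lemma ulag_interp j l : lpoly_eval (ulag j) (xi l) = (j == l)%:R.
Proof. by rewrite of_lpE ?Lag_interp // lpdeg_Lag. Qed.

Local Open Scope classical_set_scope.
Definition Iset := [set M | exists u : 'I_r -> lpoly R n r.-1,
         (forall i j, lpoly_eval (u i) (xi j) = (i == j)%:R) /\
         M = \big[Num.max/0]_(i < r) torus_max2 (u i)].

Lemma interpE_Iset : interpE xi = inf Iset.
Proof. by []. Qed.

Lemma Iset_nonempty : Iset !=set0.
Proof. by exists (\big[Num.max/0]_(i < r) torus_max2 (ulag i)); exists ulag; split => //; exact: ulag_interp. Qed.

Local Close Scope classical_set_scope.
Lemma xi_tor j : @torus R n (xi j).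
Proof. exact: wpt_tor. Qed.

Lemma Iset_ge1 : (0 < r)%N -> forall M, Iset M -> 1 <= M.
Proof.
move=> r0 M [u [hu ->]].
pose j0 : 'I_r := Ordinal r0.
apply: le_trans (le_bigmax_r _ j0).
apply: le_trans (torus_max2_ge (u j0) (xi_tor j0)).
by rewrite hu eqxx cabs1 expr1n.
Qed.

Lemma E_ge1 : (0 < r)%N -> 1 <= interpE xi.
Proof.
move=> r0; rewrite interpE_Iset; apply: lb_le_inf; first exact: Iset_nonempty.
exact: Iset_ge1.
Qed.

Lemma near_opt : exists (u : 'I_r -> lpoly R n r.-1) (M0 : R),
  [/\ (forall i j, lpoly_eval (u i) (xi j) = (i == j)%:R),
      (forall j z, @torus R n z -> cabs (lpoly_eval (u j) z) ^+ 2 <= M0) &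
      M0 < interpE xi + 1].
Proof.
have := @inf_lt R Iset (interpE xi + 1) Iset_nonempty.
rewrite -interpE_Iset ltrDl ltr01 => /(_ isT) [M [u [hu ->]] hM].
exists u, (\big[Num.max/0]_(i < r) torus_max2 (u i)); split => //.
move=> j z tz; apply: le_trans (torus_max2_ge (u j) tz) _; exact: le_bigmax_r.
Qed.
End Interp.
Lemma amgm (R : realType) (m : nat) (s : R) : (0 < m)%N -> 0 <= s -> s <= m.+1%:R ->
  s * ((m.+1%:R / m%:R) - s / m%:R) ^+ m <= 1.
Proof.
move=> m0 s0 sm.
have m0R : (0 : R) < m%:R by rewrite ltr0n.
pose x := (1 - s) / m%:R.
have bx : (m.+1%:R / m%:R) - s / m%:R = 1 + x.
  rewrite /x -natr1; field; by rewrite lt0r_neq0.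
have sx : s = 1 - m%:R * x by rewrite /x mulrC divfK ?lt0r_neq0 // subKr.
have b0 : 0 <= 1 + x.
  rewrite -bx subr_ge0 ler_pM2r ?invr_gt0 //.
have h1 : (1 + x) ^+ m <= expR (m%:R * x).
  rewrite expRM_natl; apply: lerXn2r; rewrite ?nnegrE ?expR_ge0 //.
  exact: expR_ge1Dx.
have h2 : s <= expR (- (m%:R * x)) by rewrite {1}sx; exact: expR_ge1Dx.
rewrite bx.
apply: le_trans (ler_pM s0 _ h2 h1) _; first exact: exprn_ge0.
by rewrite mulrC expRxMexpNx_1.
Qed.
Section Cert.
Variable R : realType.
Local Notation C := R[i].
Variables (n N d r : nat) (Gamma : seq {ffun 'I_n -> nat}) (g : {ffun 'I_n -> nat} -> R).
Hypotheses (uG : uniq Gamma) (sG : size Gamma = r)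
  (hN : forall b, b \in Gamma -> forall i, (b i < N)%N)
  (hG : forall b, (b \in Gamma) = (g b != 0)).
Local Notation xi' := (xi R N Gamma).
Local Notation w := (omegaN R N).
Variables (u : 'I_r -> lpoly R n r.-1) (M0 : R) (m : nat).
Hypotheses (hu : forall i j, lpoly_eval (u i) (xi' j) = (i == j)%:R)
  (hM : forall j z, @torus R n z -> cabs (lpoly_eval (u j) z) ^+ 2 <= M0)
  (hm : r%:R * M0 < m%:R) (m0 : (0 < m)%N).

Definition U j := lp_of (u j).
Definition Q j := lpmul (U j) (lpconj (U j)).
Definition sgn (j : 'I_r) : R := Num.sg (g (nth [ffun => 0%N] Gamma j)).
Definition P := lpsum (index_enum 'I_r) (fun j => lpmul (lpc n (real_complex R (sgn j))) (Q j)).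
Definition Sg := lpsum (index_enum 'I_r) Q.
Definition B := lpc n (real_complex R (m.+1%:R / m%:R)) ++
                lpmul (lpc n (real_complex R (- (m%:R)^-1))) Sg.
Definition Phi := lpexp B m.
Definition Lz (j : 'I_r) (i : 'I_n) : lp R n := [:: (1, eunit i); (- xi' j i, fun _ : 'I_n => 0)].
Definition Dj j := lpsum (index_enum 'I_n) (fun i => lpmul (Lz j i) (lpconj (Lz j i))).
Definition Hl := lpprod (index_enum 'I_r) Dj.
Definition eps : R := ((4 * n + 1)%:R ^+ r)^-1.
Definition W := lpc n 1 ++ lpmul (lpc n (real_complex R (- eps))) Hl.
Definition V := lpmul P (lpmul Phi W).

Definition qv j (z : 'I_n -> C) := cabs (lpoly_eval (u j) z) ^+ 2.
Definition sig z := \sum_(j < r) qv j z.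
Definition bv z : R := (m.+1%:R / m%:R) - sig z / m%:R.
Definition Hv (z : 'I_n -> C) := \prod_(j < r) \sum_(i < n) cabs (z i - xi' j i) ^+ 2.
Definition Vv z := (\sum_(j < r) sgn j * qv j z) * (bv z ^+ m * (1 - eps * Hv z)).

Section Eval.
Variable z : 'I_n -> C.
Hypotheses (uz : unitz z) (cz : torz z).

Lemma lpe_Q j : lpe (Q j) z = real_complex R (qv j z).
Proof. by rewrite /Q lpe_mul // lpe_conj // /U lpe_of conj_mul_cabs. Qed.

Lemma lpe_P : lpe P z = real_complex R (\sum_(j < r) sgn j * qv j z).
Proof.
rewrite /P lpe_sum.
under eq_bigr => j _ do rewrite lpe_mul // lpe_c lpe_Q -rmorphM.
by rewrite rmorph_sum.
Qed.

Lemma lpe_Sg : lpe Sg z = real_complex R (sig z).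
Proof. by rewrite /Sg lpe_sum; under eq_bigr => j _ do rewrite lpe_Q; rewrite rmorph_sum. Qed.

Lemma lpe_B : lpe B z = real_complex R (bv z).
Proof.
rewrite /B lpe_cat lpe_c lpe_mul // lpe_c lpe_Sg /bv -rmorphM -rmorphD.
by rewrite mulNr [_^-1 * _]mulrC.
Qed.

Lemma lpe_Lz j i : lpe (Lz j i) z = z i - xi' j i.
Proof. by rewrite /Lz lpe_two lmono_eunit mul1r. Qed.

Lemma lpe_Dj j : lpe (Dj j) z = real_complex R (\sum_(i < n) cabs (z i - xi' j i) ^+ 2).
Proof.
rewrite /Dj lpe_sum.
under eq_bigr => i _ do rewrite lpe_mul // lpe_conj // lpe_Lz conj_mul_cabs.
by rewrite rmorph_sum.
Qed.

Lemma lpe_Hl : lpe Hl z = real_complex R (Hv z).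
Proof.
rewrite /Hl lpe_prod //; under eq_bigr => j _ do rewrite lpe_Dj.
by rewrite rmorph_prod.
Qed.

Lemma lpe_W : lpe W z = real_complex R (1 - eps * Hv z).
Proof.
rewrite /W lpe_cat lpe_c lpe_mul // lpe_c lpe_Hl -rmorphM.
have -> : (1 : C) = real_complex R 1 by [].
by rewrite -rmorphD mulNr.
Qed.

Lemma lpe_V : lpe V z = real_complex R (Vv z).
Proof.
rewrite /V !lpe_mul // lpe_P lpe_exp // lpe_B lpe_W /Vv.
by rewrite -rmorphXn -!rmorphM.
Qed.
End Eval.

Lemma qv_ge0 j z : 0 <= qv j z.
Proof. by rewrite /qv exprn_ge0 // cabs_ge0. Qed.

Lemma sig_ge0 z : 0 <= sig z.
Proof. by apply: sumr_ge0 => j _; exact: qv_ge0. Qed.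

Lemma sig_lt z : @torus R n z -> sig z < m%:R.
Proof.
move=> tz; apply: le_lt_trans hm.
apply: le_trans (ler_sum _ (fun j _ => hM j tz)) _.
by rewrite sumr_const card_ord mulr_natl.
Qed.

Lemma sum_sq_le z : `|\sum_(j < r) sgn j * qv j z| <= sig z.
Proof.
apply: le_trans (ler_norm_sum _ _ _) _; apply: ler_sum => j _.
rewrite normrM (ger0_norm (qv_ge0 j z)) -[leRHS]mul1r ler_wpM2r ?qv_ge0 //.
by rewrite /sgn normr_sg; case: (_ != 0).
Qed.

Lemma bv_ge0 z : @torus R n z -> 0 <= bv z.
Proof.
move=> tz; rewrite /bv subr_ge0 ler_pM2r ?invr_gt0 ?ltr0n //.
apply: ltW; apply: lt_le_trans (sig_lt tz) _; by rewrite ler_nat.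
Qed.

Lemma amgm_v z : @torus R n z -> sig z * bv z ^+ m <= 1.
Proof.
move=> tz; apply: amgm => //; first exact: sig_ge0.
apply: ltW; apply: lt_le_trans (sig_lt tz) _; by rewrite ler_nat.
Qed.

Lemma Hv_ge0 z : 0 <= Hv z.
Proof.
apply: prodr_ge0 => j _; apply: sumr_ge0 => i _; by rewrite exprn_ge0 // cabs_ge0.
Qed.

Lemma cabsN (x : C) : cabs (- x) = cabs x.
Proof. exact: normcN. Qed.

Lemma term_le4 (x y : C) : cabs x = 1 -> cabs y = 1 -> cabs (x - y) ^+ 2 <= 4%:R.
Proof.
move=> hx hy.
have h : cabs (x - y) <= 2%:R by apply: le_trans (cabsD _ _) _; rewrite cabsN hx hy.
have -> : (4%:R : R) = 2%:R ^+ 2 by rewrite -natrX.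
by apply: lerXn2r; rewrite ?nnegrE ?cabs_ge0.
Qed.

Lemma Hv_le z : @torus R n z -> Hv z <= ((4 * n)%:R) ^+ r.
Proof.
move=> tz; rewrite /Hv -[X in _ <= X ^+ r]mul1r.
have -> : (1 * (4 * n)%:R) ^+ r = \prod_(j < r) (4 * n)%:R :> R.
  by rewrite mul1r prodr_const card_ord.
apply: ler_prod => j _; apply/andP; split.
  by apply: sumr_ge0 => i _; rewrite exprn_ge0 // cabs_ge0.
apply: le_trans (ler_sum _ (fun i _ => term_le4 (tz i) (xi_tor R N Gamma j i))) _.
by rewrite sumr_const card_ord natrM mulr_natr.
Qed.

Lemma eps_gt0 : 0 < eps.
Proof. by rewrite /eps invr_gt0 exprn_gt0 // ltr0n addn1. Qed.

Lemma epsH_le1 z : @torus R n z -> eps * Hv z <= 1.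
Proof.
move=> tz; rewrite /eps mulrC ler_pdivrMr ?exprn_gt0 ?ltr0n ?addn1 // mul1r.
apply: le_trans (Hv_le tz) _; apply: lerXn2r; rewrite ?nnegrE ?ler0n // ler_nat.
exact: leqnSn.
Qed.

Lemma Vv_le z : @torus R n z -> `|Vv z| <= 1 - eps * Hv z.
Proof.
move=> tz; have e1 := epsH_le1 tz.
have w0 : 0 <= 1 - eps * Hv z by rewrite subr_ge0.
rewrite /Vv normrM normrM (ger0_norm w0) (ger0_norm (exprn_ge0 m (bv_ge0 tz))).
rewrite mulrA -[leRHS]mul1r ler_wpM2r //.
apply: le_trans (amgm_v tz); rewrite ler_wpM2r ?exprn_ge0 ?bv_ge0 //.
exact: sum_sq_le.
Qed.

Lemma Vv_bound z : @torus R n z -> `|Vv z| <= 1.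
Proof.
move=> tz; apply: le_trans (Vv_le tz) _.
by rewrite lerBlDr lerDl mulr_ge0 ?Hv_ge0 // ltW // eps_gt0.
Qed.

Lemma Vv_strict z : @torus R n z -> 0 < Hv z -> `|Vv z| < 1.
Proof.
move=> tz hp; apply: le_lt_trans (Vv_le tz) _.
by rewrite ltrBlDr ltrDl mulr_gt0 // eps_gt0.
Qed.

Lemma Vv_at (b : {ffun 'I_n -> 'I_N}) : emb b \in Gamma -> Vv (zg R b) = Num.sg (g (emb b)).
Proof.
move=> hb.
have ik : (index (emb b) Gamma < r)%N by rewrite -sG index_mem.
pose k : 'I_r := Ordinal ik.
have hk : nth [ffun => 0%N] Gamma k = emb b by exact: nth_index.
have zk : zg R b = xi' k.
  by apply: funext => i; rewrite /xi /phipow hk /emb ffunE.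
rewrite zk.
have q j : qv j (xi' k) = (j == k)%:R.
  by rewrite /qv hu; case: eqP => _; rewrite ?cabs1 ?cabs0 ?expr1n ?expr0n.
have Hk : Hv (xi' k) = 0.
  by rewrite /Hv (bigD1 k) //= big1 ?mul0r // => i _; rewrite subrr cabs0 expr0n.
have s1 : sig (xi' k) = 1.
  rewrite /sig (bigD1 k) //= big1 ?addr0 ?q ?eqxx // => j /negbTE jk.
  by rewrite q jk.
have b1 : bv (xi' k) = 1.
  rewrite /bv s1 -natr1; field; by rewrite pnatr_eq0 -lt0n.
rewrite /Vv Hk b1 expr1n mulr0 subr0 !mulr1.
rewrite (bigD1 k) //= big1 ?addr0 ?q ?eqxx ?mulr1 /sgn ?hk //.
by move=> j /negbTE jk; rewrite q jk mulr0.
Qed.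

Lemma Hv_pos (b : {ffun 'I_n -> 'I_N}) : emb b \notin Gamma -> 0 < Hv (zg R b).
Proof.
move=> hb; apply: prodr_gt0 => j _.
have jG : nth [ffun => 0%N] Gamma j \in Gamma by rewrite mem_nth // sG.
have ne : emb b != nth [ffun => 0%N] Gamma j.
  by apply: contraNneq hb => ->.
case: (pickP (fun i => emb b i != nth [ffun => 0%N] Gamma j i)) => [i hi|h]; last first.
  exfalso; move/negP: ne; apply; apply/eqP/ffunP => i.
  by apply/eqP; have := h i => /negbFE.
rewrite (bigD1 i) //=; apply: ltr_pwDl; last first.
  by apply: sumr_ge0 => i' _; rewrite exprn_ge0 // cabs_ge0.
rewrite exprn_gt0 // lt_neqAle cabs_ge0 andbT eq_sym; apply/negP => /eqP h0.
have := Normc.eq0_normc h0 => /eqP; rewrite subr_eq0 => /eqP e.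
move/negP: hi; apply; apply/eqP.
rewrite /emb ffunE; apply: (@omega_inj R N).
- exact: ltn_ord.
- exact: (hN jG i).
- by move: e; rewrite /zg /xi /phipow.
Qed.

Lemma size_ie k : size (index_enum 'I_k) = k.
Proof. rewrite -[RHS]card_ord cardT enumT. by rewrite /index_enum unlock. Qed.

Lemma lpdeg_V : lpdeg (2 * r * m.+2) V.
Proof.
set a := r.-1.
have hQ j : lpdeg (a + a) (Q j).
  by apply: lpdeg_mul; [exact: lpdeg_of | apply: lpdeg_conj; exact: lpdeg_of].
have hP : lpdeg (0 + (a + a)) P.
  by apply: lpdeg_sum => j; apply: lpdeg_mul => //; exact: lpdeg_c.
have hB : lpdeg (0 + (a + a)) B.
  apply: lpdeg_cat; first exact: lpdeg_c.
  by apply: lpdeg_mul; [exact: lpdeg_c | exact: lpdeg_sum].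
have hPhi := lpdeg_exp m hB.
have hLz j i : lpdeg 1 (Lz j i) by rewrite /lpdeg /= l1deg_eunit l1deg0.
have hD j : lpdeg (1 + 1) (Dj j).
  by apply: lpdeg_sum => i; apply: lpdeg_mul => //; apply: lpdeg_conj.
have hH := lpdeg_prod (index_enum 'I_r) hD.
have hW : lpdeg (0 + (1 + 1) * size (index_enum 'I_r)) W.
  apply: lpdeg_cat; first exact: lpdeg_c.
  by apply: lpdeg_mul => //; exact: lpdeg_c.
have := lpdeg_mul hP (lpdeg_mul hPhi hW); apply: lpdegW.
rewrite size_ie.
have ha : (a <= r)%N by rewrite /a leq_pred.
clearbody a; nia.
Qed.

End Cert.
Lemma zg_xi (R : realType) n N r (Gamma : seq {ffun 'I_n -> nat}) (sG : size Gamma = r)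
  (b : {ffun 'I_n -> 'I_N}) : emb b \in Gamma ->
  exists k : 'I_r, nth [ffun => 0%N] Gamma k = emb b /\ zg R b = xi R N Gamma k.
Proof.
move=> hb.
have ik : (index (emb b) Gamma < r)%N by rewrite -sG index_mem.
exists (Ordinal ik).
have hk : nth [ffun => 0%N] Gamma (Ordinal ik) = emb b by exact: nth_index.
split => //.
by apply: funext => i; rewrite /xi /phipow hk /emb ffunE.
Qed.

Lemma Re_real (R : realType) (x : R) : complex.Re (real_complex R x) = x.
Proof. by []. Qed.

Unset Implicit Arguments. Set Strict Implicit.

Theorem proposition3p8 (R : realType) (r : nat) :
  exists C : R, 0 < C /\
  forall (n N d : nat) (Gamma : seq {ffun 'I_n -> nat})
         (g : {ffun 'I_n -> nat} -> R),
    uniq Gamma ->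
    (forall beta, (beta \in Gamma) = (g beta != 0)) ->
    size Gamma = r ->
    (forall beta, beta \in Gamma -> forall i, (beta i < N)%N) ->
    C * interpE (fun j : 'I_r => phipow R N (nth [ffun => 0%N] Gamma j))
      <= d%:R ->
    LPunique_opt d (fun alpha => rpoly_eval Gamma g (phipowz R N alpha))
                 (@coef_box R n N g).
Proof.
exists ((4 * r * r + 6 * r + 1)%:R); split; first by rewrite ltr0n addn1.
move=> n N d Gamma g uG hG sG hN hC.
have feas : LPfeasible d (fun alpha => rpoly_eval Gamma g (phipowz R N alpha))
                 (@coef_box R n N g).
  by move=> alpha _; exact: feas0.
split => // x hx nx.
have ad := annih_diff hx feas.
have x0out (b : {ffun 'I_n -> 'I_N}) : emb b \notin Gamma -> coef_box g b = 0.
  by rewrite hG negbK => /eqP.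
case: (posnP r) => [r0|r0].
  have G0 : Gamma = [::] by apply: size0nil; rewrite sG r0.
  apply: (@lp_unique R n N _ _ (fun _ => 0) pred0) => //.
  - by move=> b; rewrite mul0r x0out ?normr0 // G0 in_nil.
  - by move=> b; rewrite normr0.
  - by move=> b _; rewrite normr0.
  - by rewrite big1 // => b _; rewrite mul0r.
  - by move=> h; apply: funext => b; apply: h.
have [u [M0 [hu hM hME]]] := near_opt R uG sG hN.
have hE1 := E_ge1 R uG sG hN r0.
set E := interpE (xi R N Gamma) in hME hE1.
have hC' : (4 * r * r + 6 * r + 1)%:R * E <= d%:R by exact: hC.
pose j0 : 'I_r := Ordinal r0.
have M01 : 1 <= M0.
  have := hM j0 _ (xi_tor R N Gamma j0); rewrite hu eqxx cabs1 expr1n; exact.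
pose m := (Num.truncn (r%:R * M0)).+1.
have m0 : (0 < m)%N by [].
have hm : r%:R * M0 < m%:R.
  by rewrite /m real_truncnS_gt // num_real.
have hmle : m%:R <= r%:R * M0 + 1.
  rewrite /m -natr1 lerD2r truncn_le mulr_ge0 ?ler0n //.
  exact: le_trans ler01 M01.
have hd : (2 * r * m.+2 <= d)%N.
  rewrite -(ler_nat R); apply: le_trans hC'.
  have rge1 : 1 <= (r%:R : R) by rewrite ler1n.
  have e1 : ((2 * r * m.+2)%:R : R) = 2 * r%:R * (m%:R + 2).
    by rewrite !natrM -[m.+2]addn2 natrD.
  have e2 : ((4 * r * r + 6 * r + 1)%:R : R) = 4 * r%:R * r%:R + 6 * r%:R + 1.
    by rewrite !natrD !natrM; ring.
  rewrite e1 e2.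
  move: rge1 hmle hME hE1 M01; set t := (r%:R : R); set mm := (m%:R : R) => rge1 hmle hME hE1 M01.
  have h1 : t * mm <= t * (t * M0 + 1) by rewrite ler_wpM2l // (le_trans ler01 rge1).
  have h2 : t * t * M0 <= t * t * (E + 1).
    by rewrite ler_wpM2l ?(ltW hME) // mulr_ge0 // (le_trans ler01 rge1).
  have h3 : 0 <= t * t * (E - 1).
    by rewrite mulr_ge0 ?subr_ge0 // mulr_ge0 // (le_trans ler01 rge1).
  have h4 : 0 <= t * (E - 1).
    by rewrite mulr_ge0 ?subr_ge0 // (le_trans ler01 rge1).
  nra.
have hV := lpdegW hd (lpdeg_V N g uG sG u hm m0).
pose v (b : {ffun 'I_n -> 'I_N}) := complex.Re (lpe (V N Gamma g u m) (zg R b)).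
have vE b : v b = Vv N Gamma g u m (zg R b).
  by rewrite /v lpe_V; [| exact: zg_unit | exact: zg_tor].
have ztor (b : {ffun 'I_n -> 'I_N}) : @torus R n (zg R b) by exact: wpt_tor.
apply: (@lp_unique R n N _ _ v (fun b => emb b \in Gamma)).
- move=> b; rewrite vE; case: (boolP (emb b \in Gamma)) => hb.
    by rewrite (Vv_at g sG hu m0 hb) /coef_box normrEsg.
  by rewrite x0out // mulr0 normr0.
- by move=> b; rewrite vE; exact: (Vv_bound N Gamma g hM hm m0 (ztor b)).
- move=> b hb; rewrite vE; apply: (Vv_strict g hM hm m0 (ztor b)).
  exact: Hv_pos.
- exact: annih_Re ad hV.
- move=> hout; apply: funext => b0.
  case: (boolP (emb b0 \in Gamma)) => hb0; last exact: hout.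
  have [k [hk zk]] := zg_xi R sG hb0.
  have hL : lpdeg d (lp_of (u k)).
    apply: lpdegW (lpdeg_of (u k)).
    apply: leq_trans hd; have := leq_pred r; nia.
  have := annih_lp ad hL.
  rewrite (bigD1 b0) //= big1 ?addr0.
    rewrite lpe_of zk hu eqxx mul1r => /(congr1 (@complex.Re R)) /= /eqP.
    by rewrite subr_eq0 => /eqP.
  move=> b nb; case: (boolP (emb b \in Gamma)) => hb; last by rewrite hout // subrr mulr0.
  have [j [hj zj]] := zg_xi R sG hb.
  rewrite lpe_of zj hu.
  have -> : (k == j) = false.
    apply/negP => /eqP e; move/negP: nb; apply; apply/eqP.
    by apply: emb_inj; rewrite -hk -hj e.
  by rewrite mul0r.
- exact: nx.
Qed.
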